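(* Let $\Gamma$ be a finite connected $(G,2)$-distance-transitive graph, and suppose $\Gamma\not\cong \mathrm{K}_{m[b]}$ for any $m\ge3$ and $b\ge2$. Let $N$ be a normal subgroup of $G$ maximal with respect to having at least $3$ orbits on $V(\Gamma)$. Then $N$ is semiregular on $V(\Gamma)$, $G/N$ is quasiprimitive or bi-quasiprimitive on $V(\Gamma_N)$, $\Gamma$ is a cover of $\Gamma_N$, and either $\Gamma_N$ is a complete $G/N$-arc-transitive graph or $\Gamma_N$ is a non-complete $(G/N,2)$-distance-transitive graph. Moreover, if $\Gamma$ is $G$-locally-primitive, then $\Gamma_N$ is $G/N$-locally-primitive; and if $\Gamma$ has odd order, then $\Gamma_N$ has odd order.
   Context: For $G\le\mathrm{Aut}(\Gamma)$ and $s\le d(\Gamma)$, $\Gamma$ is $(G,s)$-distance-transitive if $G$ is vertex-transitive and $G_u$ is transitive on $\Gamma_i(u)$ for all $i\le s$ and all vertices $u$. $\mathrm{K}_{m[b]}$ is the complete multipartite graph with $m$ parts of size $b$. $\Gamma_N$ is the quotient graph whose vertices are the $N$-orbits, two orbits adjacent iff some vertices in them are adjacent; $\Gamma$ is a cover of $\Gamma_N$ if for any two adjacent orbits $B,B'$ each vertex of $B$ has exactly one neighbour in $B'$. A transitive group is quasiprimitive if every nontrivial normal subgroup is transitive, and bi-quasiprimitive if every nontrivial normal subgroup has at most two orbits and some one has exactly two. $\Gamma$ is $G$-locally-primitive if $G_u$ is primitive on $\Gamma(u)$ for all $u$; $G$-arc-transitive means $G$ is transitive on arcs. *)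

(* Defs.v *)
From mathcomp Require Import all_boot all_order all_fingroup.
Set Implicit Arguments. Unset Strict Implicit. Unset Printing Implicit Defensive.
Import GroupScope.

Section GenericAction.
Variables (T : finType) (aT : finGroupType).
Implicit Types (A : {set aT}) (act : T -> aT -> T) (S W B : {set T}).

Definition gimage act (B : {set T}) (a : aT) : {set T} := [set act x a | x in B].

Definition gorbit A act (x : T) : {set T} := [set act x a | a in A].

Definition gstab A act (x : T) : {set aT} := [set a in A | act x a == x].

Definition transitive_on A act S : Prop :=
  forall x y, x \in S -> y \in S -> exists2 a, a \in A & act x a = y.

Definition norbits A act S : nat := #|[set gorbit A act x | x in S]|.

Definition is_block A act S B : Prop :=
  B \subset S /\ forall a, a \in A -> gimage act B a = B \/ [disjoint gimage act B a & B].

Definition primitive_on A act S : Prop :=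
  transitive_on A act S /\
  forall B, is_block A act S B -> B != set0 -> (#|B| <= 1)%N \/ B = S.

End GenericAction.

Definition quasiprimitive_on (T : finType) (aT : finGroupType) (A : {group aT})
    (act : T -> aT -> T) (S : {set T}) : Prop :=
  transitive_on A act S /\
  forall M : {group aT}, M <| A -> M :!=: 1 -> transitive_on M act S.

Definition biquasiprimitive_on (T : finType) (aT : finGroupType) (A : {group aT})
    (act : T -> aT -> T) (S : {set T}) : Prop :=
  transitive_on A act S /\
  (forall M : {group aT}, M <| A -> M :!=: 1 -> (norbits M act S <= 2)%N) /\
  (exists M : {group aT}, [/\ M <| A, M :!=: 1 & norbits M act S = 2%N]).

Section Graphs.
(* A simple graph with vertex set W (a subset of the finite type T) and
   adjacency relation adj (only its restriction to W matters). *)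
Variables (T : finType) (W : {set T}) (adj : rel T).

Fixpoint walk (n : nat) (x y : T) : bool :=
  if n is n'.+1 then walk n' x y || [exists z in W, walk n' x z && adj z y]
  else x == y.

(* graph distance (equals #|T| if y is unreachable from x) *)
Definition dist (x y : T) : nat := find (fun n => walk n x y) (iota 0 #|T|).

Definition sphere (i : nat) (u : T) : {set T} := [set v in W | dist u v == i].

Definition nbhd (u : T) : {set T} := [set v in W | adj u v].

Definition diameter : nat := \max_(u in W) \max_(v in W) dist u v.

Definition complete_graph : Prop :=
  forall u v, u \in W -> v \in W -> u != v -> adj u v.

Variables (aT : finGroupType) (A : {set aT}) (act : T -> aT -> T).

Definition dist_transitive (s : nat) : Prop :=
  [/\ (s <= diameter)%N,
      transitive_on A act W &
      forall i u, (i <= s)%N -> u \in W -> transitive_on (gstab A act u) act (sphere i u)].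

Definition arc_transitive : Prop :=
  forall u v u' v', u \in W -> v \in W -> u' \in W -> v' \in W ->
    adj u v -> adj u' v' -> exists2 a, a \in A & act u a = u' /\ act v a = v'.

Definition locally_primitive : Prop :=
  forall u, u \in W -> primitive_on (gstab A act u) act (nbhd u).

End Graphs.

Definition is_Kmb (V : finType) (adj : rel V) (m b : nat) : Prop :=
  exists P : {set {set V}},
    [/\ partition P [set: V], #|P| = m, (forall B, B \in P -> #|B| = b) &
        forall x y, adj x y = (pblock P x != pblock P y)].

Definition pact (V : finType) (x : V) (g : {perm V}) : V := g x.

(* the set of N-orbits on V, i.e. the vertex set of Gamma_N *)
Definition norbs (V : finType) (N : {set {perm V}}) : {set {set V}} :=
  [set gorbit N (@pact V) x | x in [set: V]].

(* adjacency of the quotient graph Gamma_N (no loops) *)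
Definition qadj (V : finType) (adj : rel V) : rel {set V} :=
  fun B B' => (B != B') && [exists x in B, exists y in B', adj x y].

(* induced action of G/N on the N-orbits: coset c acts through a representative *)
Definition cact (V : finType) (N : {set {perm V}}) (B : {set V}) (c : coset_of N)
  : {set V} := [set (repr c : {perm V}) x | x in B].

Definition semiregular (V : finType) (N : {set {perm V}}) : Prop :=
  forall x : V, gstab N (@pact V) x = 1.

Definition is_cover (V : finType) (adj : rel V) (N : {set {perm V}}) : Prop :=
  forall B B', B \in norbs N -> B' \in norbs N -> qadj adj B B' ->
    forall x, x \in B -> #|[set y in B' | adj x y]| = 1%N.

(* Main.v *)
Require Import Defs.
From mathcomp Require Import all_boot all_order all_fingroup.
From Stdlib Require Import Classical.
Set Implicit Arguments. Unset Strict Implicit.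

Section Dist.
Variables (T : finType) (W : {set T}) (adj : rel T).
Hypothesis hT : 2 < #|T|.

Lemma walk1E x y : walk W adj 1 x y = (x == y) || (x \in W) && adj x y.
Proof.
rewrite /=; congr (_ || _); apply/existsP/idP.
  by case=> z /andP[zW /andP[/eqP-> ->]]; rewrite zW.
by move=> /andP[xW a]; exists x; rewrite xW eqxx a.
Qed.

Lemma distE x y : exists k, dist W adj x y =
  (if walk W adj 0 x y then 0 else if walk W adj 1 x y then 1
  else if walk W adj 2 x y then 2 else k.+3)%N.
Proof.
rewrite /dist; move: hT; case: #|T| => [|[|[|k]]] // _.
have fE : forall p : pred nat, find p (iota 0 k.+3) = (if p 0 then 0 else if p 1 then 1
  else if p 2 then 2 else (find p (iota 3 k)).+3)%N.
  by move=> p /=; case: (p 0) => //; case: (p 1) => //; case: (p 2).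
by rewrite fE; eexists.
Qed.

Lemma walk2E x y : walk W adj 2 x y = [|| x == y, (x \in W) && adj x y |
  [exists z in W, ((x \in W) && adj x z) && adj z y]].
Proof.
have -> : walk W adj 2 x y = walk W adj 1 x y || [exists z in W, walk W adj 1 x z && adj z y] by [].
rewrite walk1E -orbA; case: (x =P y) => [->|nxy] /=.
  by rewrite ?eqxx ?orbT.
case: ((x \in W) && adj x y) / idP => //= h1.
apply/existsP/existsP => -[z /andP[zW /andP[hz hzy]]]; exists z; rewrite zW hzy /=.
  have hz' : walk W adj 1 x z := hz.
  rewrite walk1E in hz'; case/orP: hz' => [/eqP xz|]; last by rewrite andbT.
  by subst z; rewrite zW hzy in h1.
rewrite andbT; have : walk W adj 1 x z by rewrite walk1E hz orbT.
by [].
Qed.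

Lemma dist0 x y : (dist W adj x y == 0)%N = (x == y).
Proof.
have [k ->] := distE x y; rewrite /=.
by case: (x == y) => //; case: ifP => //; case: ifP.
Qed.

Lemma dist1 x y : (dist W adj x y == 1)%N = (x != y) && (x \in W) && adj x y.
Proof.
have [k ->] := distE x y; rewrite walk2E walk1E /=.
case: (x =P y) => //= _; case: ifP => //= _; by case: ifP.
Qed.

Lemma dist2 x y : (dist W adj x y == 2)%N =
  (x != y) && ~~ ((x \in W) && adj x y) &&
  [exists z in W, ((x \in W) && adj x z) && adj z y].
Proof.
have [k ->] := distE x y; rewrite walk2E walk1E /=.
case: (x =P y) => [_|nxy] //=.
by case: ((x \in W) && adj x y); case: [exists z in W, (x \in W) && adj x z && adj z y].
Qed.

Lemma dist_ge2 x y : x != y -> ~~ ((x \in W) && adj x y) -> 2 <= dist W adj x y.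
Proof.
move=> nxy na; have [k ->] := distE x y; rewrite walk2E walk1E /= (negbTE nxy) /=.
rewrite (negbTE na) /=; by case: ifP.
Qed.

Lemma dist_le_diam u v : u \in W -> v \in W -> dist W adj u v <= diameter W adj.
Proof.
move=> uW vW; rewrite /diameter; apply: (leq_trans _ (leq_bigmax_cond _ uW)).
exact: (leq_bigmax_cond _ vW).
Qed.

End Dist.

Section Main.
Local Open Scope group_scope.
Variables (V : finType) (adj : rel V) (G N : {group {perm V}}).
Hypotheses (hsym : symmetric adj) (hirr : irreflexive adj)
 (hinv : forall g x y, g \in G -> adj (g x) (g y) = adj x y)
 (hconn : forall x y : V, connect adj x y)
 (hdt : dist_transitive [set: V] adj G (@pact V) 2)
 (hN : N <| G) (h3 : 3 <= #|norbs N|).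

Local Open Scope group_scope.
Local Notation O x := (orbit 'P%act N x).

Lemma NG : N \subset G. Proof. exact: normal_sub hN. Qed.
Lemma GnN : G \subset 'N(N). Proof. exact: normal_norm hN. Qed.
Lemma inG n : n \in N -> n \in G. Proof. by move/(subsetP NG). Qed.
Lemma inNN g : g \in G -> g \in 'N(N). Proof. by move/(subsetP GnN). Qed.

Lemma norbsE : norbs N = [set O x | x in [set: V]]. Proof. by []. Qed.

Lemma OP x y : reflect (exists2 n, n \in N & n x = y) (y \in O x).
Proof. exact: (iffP orbitP). Qed.

Lemma Orefl x : x \in O x. Proof. exact: orbit_refl. Qed.

Lemma Oeq x y : y \in O x -> O y = O x.
Proof. by move=> h; apply/orbit_eqP. Qed.

Lemma Oin x n : n \in N -> n x \in O x.
Proof. by move=> hn; apply/OP; exists n. Qed.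

Lemma ON x n : n \in N -> O (n x) = O x.
Proof. by move=> hn; apply: Oeq; apply: Oin. Qed.

Lemma Oimg1 g x y : g \in G -> y \in O x -> g y \in O (g x).
Proof.
move=> hg /OP[n hn <-]; apply/OP; exists (n ^ g); last by rewrite /= -!permM [n * g]conjgC.
by rewrite memJ_norm // inNN.
Qed.

Lemma Oimg g x : g \in G -> O (g x) = [set g y | y in O x].
Proof.
move=> hg; apply/setP => z; apply/idP/imsetP => [hz|[y hy ->]]; last exact: Oimg1.
exists (g^-1 z); last by rewrite -permM mulVg perm1.
have := Oimg1 (groupVr hg) hz; by rewrite -permM mulgV perm1.
Qed.

Lemma V3 : 2 < #|V|.
Proof. apply: (leq_trans h3); rewrite norbsE; apply: (leq_trans (leq_imset_card _ _)); by rewrite cardsT. Qed.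

Lemma T3 : 2 < #|{set V}|.
Proof. apply: (leq_trans h3); exact: max_card. Qed.

Lemma norbsP B : reflect (exists x, B = O x) (B \in norbs N).
Proof.
apply: (iffP imsetP) => [[x _ ->]|[x ->]]; by exists x.
Qed.

Lemma norbs_mem B w : B \in norbs N -> w \in B -> B = O w.
Proof. by case/norbsP => x -> h; rewrite (Oeq h). Qed.

Lemma adjN n x y : n \in N -> adj (n x) (n y) = adj x y.
Proof. by move=> hn; apply: hinv; apply: inG. Qed.

Lemma Oshift x p q : p \in O x -> adj p q -> exists2 q', adj x q' & q \in O q'.
Proof.
case/OP => n hn <- hq; exists (n^-1 q).
  by rewrite -(adjN _ _ hn) permKV.
by rewrite (ON _ (groupVr hn)) Orefl.
Qed.

Lemma conn_set (S : pred V) x : x \in S ->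
  (forall p q, p \in S -> adj p q -> q \in S) -> forall v, v \in S.
Proof.
move=> hx hcl v; have cl : closed adj S.
  move=> p q hpq; apply/idP/idP => h; first exact: hcl h hpq.
  by apply: hcl h _; rewrite hsym.
by rewrite -(closed_connect cl (hconn x v)).
Qed.

Lemma norbs_small x a : (forall v, (v \in O x) || (v \in O a)) -> #|norbs N| <= 2.
Proof.
move=> h; apply: leq_trans (_ : #|[set O x; O a]| <= 2).
  apply: subset_leq_card; apply/subsetP => B /norbsP[v ->].
  by rewrite !inE; case/orP: (h v) => /Oeq ->; rewrite eqxx ?orbT.
by rewrite cards2; case: (_ != _).
Qed.


Lemma Gtr x y : exists2 g, g \in G & g x = y.
Proof. by case: hdt => _ htr _; apply: htr; rewrite in_setT. Qed.

Lemma sph1 u v : (v \in sphere [set: V] adj 1 u) = adj u v.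
Proof.
rewrite inE in_setT /= dist1 ?V3 // in_setT andbT.
by case: (u =P v) => [->|_]; rewrite ?hirr.
Qed.

Definition rel2 u v := [&& u != v, ~~ adj u v & [exists z, adj u z && adj z v]].

Lemma sph2 u v : (v \in sphere [set: V] adj 2 u) = rel2 u v.
Proof.
rewrite inE in_setT /= dist2 ?V3 // in_setT /rel2 andbA.
congr (_ && _); apply/existsP/existsP => -[z]; rewrite ?in_setT /= => h; by exists z; rewrite ?in_setT.
Qed.

Lemma Gu1 u v w : adj u v -> adj u w -> exists2 g, g \in G & g u = u /\ g v = w.
Proof.
move=> hv hw; case: hdt => _ _ hloc.
have := hloc 1%N u isT (in_setT u) v w; rewrite !sph1 => /(_ hv hw) [g].
by rewrite inE => /andP[hg /eqP hu] hgv; exists g.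
Qed.

Lemma Gu2 u v w : rel2 u v -> rel2 u w -> exists2 g, g \in G & g u = u /\ g v = w.
Proof.
move=> hv hw; case: hdt => _ _ hloc.
have := hloc 2%N u isT (in_setT u) v w; rewrite !sph2 => /(_ hv hw) [g].
by rewrite inE => /andP[hg /eqP hu] hgv; exists g.
Qed.

Lemma rel2G g u v : g \in G -> rel2 u v -> rel2 (g u) (g v).
Proof.
move=> hg /and3P[nuv nadj /existsP[z /andP[h1 h2]]].
apply/and3P; split; first by rewrite (inj_eq perm_inj).
  by rewrite hinv.
by apply/existsP; exists (g z); rewrite !hinv // h1.
Qed.

Lemma adjO x y : adj x y -> O x != O y.
Proof.
move=> hxy; apply/negP => /eqP eO.
have hy : y \in O x by rewrite eO Orefl.
have all1 : forall p q, adj p q -> q \in O p.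
  move=> p q hpq; have [g hg gx] := Gtr x p.
  have e : adj p (g y) by rewrite -gx hinv.
  have [h hh [hp hq]] := Gu1 e hpq.
  have := Oimg1 (groupM hg hh) hy; by rewrite !permM gx hp hq.
have hall : forall v, v \in [pred v | v \in O x].
  by apply: (conn_set (Orefl x)) => p q /= hp /all1 hq; rewrite -(Oeq hp).
have hall' : forall v, (v \in O x) || (v \in O x) by move=> v; rewrite orbb; exact: hall.
have := norbs_small hall'.
by rewrite leqNgt h3.
Qed.

Lemma has_nbr u : exists a, adj u a.
Proof.
case: (boolP [exists a, adj u a]) => [/existsP//|/existsPn hn]; exfalso.
have hall : forall v, v \in [pred v | v == u].
  apply: (conn_set (x := u)); first by rewrite inE.
  by move=> p q /= /eqP -> hq; move: (hn q); rewrite hq.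
have : #|[set: V]| <= #|[set u]|.
  by apply: subset_leq_card; apply/subsetP => v _; rewrite inE; exact: hall.
by rewrite cardsT cards1 leqNgt (leq_trans _ V3).
Qed.

Lemma L2 u : exists a c, [/\ adj u a, adj u c & O a != O c].
Proof.
case: (boolP [exists a, exists c, [&& adj u a, adj u c & O a != O c]]).
  by case/existsP => a /existsP[c /and3P[h1 h2 h3']]; exists a, c.
move=> hno; exfalso.
have H1 : forall w a c, adj w a -> adj w c -> O a = O c.
  move=> w a c ha hc; have [g hg gw] := Gtr w u.
  have : O (g a) = O (g c).
    move/existsPn: hno => /(_ (g a)) /existsPn /(_ (g c)).
    by rewrite -gw !hinv // ha hc /= negbK => /eqP.
  rewrite !Oimg // => e.
  by rewrite -(permK g a) -(permK g c) !Oimg ?groupV // e.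
have [a0 ha0] := has_nbr u.
have hall : forall v, (v \in O u) || (v \in O a0).
  have hall : forall v, v \in [pred v | (v \in O u) || (v \in O a0)].
    apply: (conn_set (x := u)); first by rewrite inE Orefl.
    move=> p q /= /orP[hp|hp] hpq.
      have [q' hq' hq] := Oshift hp hpq.
      by rewrite inE (H1 _ _ _ ha0 hq') hq orbT.
    have [q' hq' hq] := Oshift hp hpq.
    have ha0u : adj a0 u by rewrite hsym.
    by rewrite inE (H1 _ _ _ ha0u hq') hq.
  exact: hall.
by have := norbs_small hall; rewrite leqNgt h3.
Qed.

Lemma actsT : [acts N, on [set: V] | 'P].
Proof. apply/subsetP => a _; rewrite !inE /=; apply/subsetP => x _; by rewrite !inE. Qed.

Lemma partN : partition (norbs N) [set: V].
Proof. exact: orbit_partition actsT. Qed.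

Lemma pblockN x : pblock (norbs N) x = O x.
Proof.
case/and3P: partN => _ tI _; apply: def_pblock => //; last exact: Orefl.
by apply/norbsP; exists x.
Qed.

Lemma cardO x y : #|O x| = #|O y|.
Proof.
have [g hg <-] := Gtr x y; rewrite Oimg //; by rewrite card_imset //; exact: perm_inj.
Qed.

Hypothesis hnK : ~ (exists m b, 3 <= m /\ 2 <= b /\ is_Kmb adj m b).

Lemma uniq_nbr x y y' : adj x y -> adj x y' -> y' \in O y -> y = y'.
Proof.
move=> hy hy' hO; apply/eqP; apply/negPn/negP => nyy'; exfalso; apply: hnK.
have r2 : rel2 y y'.
  apply/and3P; split => //.
    by apply/negP => /adjO; rewrite (Oeq hO) eqxx.
  by apply/existsP; exists x; rewrite hsym hy hy'.
have F2 : forall p q, rel2 p q -> q \in O p.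
  move=> p q hpq; have [g hg gy] := Gtr y p.
  have r2' : rel2 p (g y') by rewrite -gy; exact: rel2G.
  have [h hh [hp hq]] := Gu2 r2' hpq.
  have := Oimg1 (groupM hg hh) hO; by rewrite !permM gy hp hq.
have P : forall x c d, adj x c -> adj x d -> O c != O d -> adj c d.
  move=> z c d hc hd ncd; case: (boolP (adj c d)) => // nadj.
  have : rel2 c d.
    apply/and3P; split => //; first by apply: contraNneq ncd => ->.
    by apply/existsP; exists z; rewrite hsym hc hd.
  by move/F2/Oeq => e; rewrite e eqxx in ncd.
pose near u v := [|| u == v, adj u v | [exists z, adj u z && adj z v]].
have hnear : forall u v, near u v.
  move=> u; have := @conn_set [pred v | near u v] u.
  move=> h v; apply: h; first by rewrite inE /near eqxx.
  move=> p q; rewrite !inE => hp hpq.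
  case: (boolP (near u q)) => // nq; exfalso.
  move: nq; rewrite /near !negb_or => /and3P[nuq nadj /existsPn ncom].
  have ncom' : forall z, adj u z -> adj z q -> False.
    by move=> z h1 h2; move: (ncom z); rewrite h1 h2.
  case/or3P: hp => [/eqP up | hup | /existsP[z /andP[huz hzp]]].
  - by subst p; rewrite hpq in nadj.
  - exact: ncom' hup hpq.
  have rup : rel2 u p.
    apply/and3P; split.
    + by apply: contraNneq nadj => ->.
    + by apply/negP => hup; exact: ncom' hup hpq.
    + by apply/existsP; exists z; rewrite huz hzp.
  have rzq : rel2 z q.
    apply/and3P; split.
    + by apply: contraNneq nadj => <-.
    + by apply/negP => hzq; exact: ncom' huz hzq.
    + by apply/existsP; exists p; rewrite hzp hpq.
  have Op := Oeq (F2 _ _ rup); have Oq := Oeq (F2 _ _ rzq).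
  have [c' hc' nc'] : exists2 c', adj u c' & O c' != O z.
    have [a [c [ha hc nac]]] := L2 u.
    case: (O a =P O z) => [e|ne]; last by exists a => //; apply/eqP.
    by exists c => //; rewrite -e eq_sym.
  have hzc : adj z c' by apply: P huz hc' _; rewrite eq_sym.
  have hcp : adj c' p.
    apply: (P z) => //.
    by rewrite Op eq_sym; exact: adjO.
  have hcq : adj c' q.
    by apply: (P p); [rewrite hsym | exact: hpq | rewrite Oq].
  exact: ncom' hc' hcq.
have hK : forall u v, adj u v = (O u != O v).
  move=> u v; apply/idP/idP; first exact: adjO.
  move=> nuv; case/or3P: (hnear u v) => [/eqP e|//|hz]; first by rewrite e eqxx in nuv.
  case: (boolP (adj u v)) => // nadj.
  have : rel2 u v by apply/and3P; split => //; apply: contraNneq nuv => ->.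
  by move/F2/Oeq => e; rewrite e eqxx in nuv.
exists #|norbs N|, #|O y|; split => //; split.
  have : #|[set y; y']| <= #|O y|.
    by apply: subset_leq_card; apply/subsetP => v; rewrite !inE => /orP[] /eqP ->; rewrite ?Orefl.
  by rewrite cards2 nyy'.
exists (norbs N); split => //; first exact: partN.
  by move=> B /norbsP[z ->]; exact: cardO.
by move=> u v; rewrite !pblockN hK.
Qed.

Lemma qadjE x y : qadj adj (O x) (O y) = [exists y', (y' \in O y) && adj x y'].
Proof.
apply/idP/existsP.
  case/andP => _ /existsP[x0 /andP[hx0 /existsP[y0 /andP[hy0 ha]]]].
  have [q' hq' hy0q] := Oshift hx0 ha.
  by exists q'; rewrite hq' andbT -(Oeq hy0) (Oeq hy0q) Orefl.
case=> y' /andP[hy' ha]; apply/andP; split; first by rewrite -(Oeq hy'); exact: adjO.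
by apply/existsP; exists x; rewrite Orefl /=; apply/existsP; exists y'; rewrite hy' ha.
Qed.

Lemma coverN : is_cover adj N.
Proof.
move=> B B' hB hB' hq x hx; rewrite (norbs_mem hB hx) in hq.
case/norbsP: hB' => b eB'; rewrite eB' in hq *.
case/existsP: (eqbLR (qadjE x b) hq) => y' /andP[hy' ha].
have -> : [set y in O b | adj x y] = [set y'].
  apply/setP => z; rewrite !inE; apply/andP/eqP => [[hz hxz]|->]; last by [].
  by apply/esym/(uniq_nbr ha hxz); rewrite (Oeq hy').
exact: cards1.
Qed.

Lemma semiregN : semiregular N.
Proof.
move=> x; apply/setP => a; rewrite !inE; apply/andP/eqP => [[hn /eqP hx]|->]; last first.
  by rewrite group1 /pact perm1.
apply/permP => v; rewrite perm1.
have := @conn_set [pred v | a v == v] x; rewrite inE [a x]hx eqxx => /(_ isT) h.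
apply/eqP; apply: h => p q; rewrite !inE => /eqP hp hpq.
have hpq' : adj p (a q) by rewrite -{1}hp adjN.
by apply/eqP/esym; apply: uniq_nbr hpq hpq' _; apply: Oin.
Qed.

Lemma cardON x : #|O x| = #|N|.
Proof.
rewrite /orbit card_in_imset // => a b ha hb e.
have e' : a x = b x := e.
have : a * b^-1 \in gstab N (@pact V) x.
  by rewrite inE groupM ?groupV //= /pact permM e' permK eqxx.
by rewrite semiregN inE mulg_eq1 invgK => /eqP.
Qed.

Lemma oddN : odd #|V| -> odd #|norbs N|.
Proof.
have := acts_sum_card_orbit actsT; rewrite -norbsE.
rewrite (eq_bigr (fun _ => #|N|)) ?sum_nat_const ?cardsT => [<-|B /norbsP[z ->]].
  by rewrite oddM => /andP[].
exact: cardON.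
Qed.

Lemma reprG c : c \in G / N -> repr c \in G.
Proof.
move=> hc; rewrite -(quotientGK hN); apply: mem_morphpre; first exact: repr_coset_norm.
by rewrite /= coset_reprK.
Qed.

Lemma cactE g x : g \in G -> cact (O x) (coset N g) = O (g x).
Proof.
move=> hg; rewrite /cact.
have : repr (coset N g) \in N :* g by rewrite -val_coset ?inNN // mem_repr_coset.
case/rcosetP => n hn ->.
by rewrite -(Oimg _ (groupM (inG hn) hg)) permM (Oimg _ hg) ON // -(Oimg _ hg).
Qed.

Lemma cactE' c x : c \in G / N -> cact (O x) c = O (repr c x).
Proof. by move=> hc; rewrite -cactE ?reprG // coset_reprK. Qed.

Lemma cact_norbs B c : B \in norbs N -> c \in G / N -> cact B c \in norbs N.
Proof. by case/norbsP => x -> hc; rewrite cactE'//; apply/norbsP; eexists. Qed.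

Lemma cactM B c d : B \in norbs N -> c \in G / N -> d \in G / N ->
  cact (cact B c) d = cact B (c * d).
Proof.
case/norbsP => x -> hc hd.
have e : c * d = coset N (repr c * repr d) by rewrite morphM ?inNN ?reprG //= !coset_reprK.
by rewrite e cactE ?groupM ?reprG // permM !cactE'.
Qed.

Lemma cact1 B : cact B (1 : coset_of N) = B.
Proof.
rewrite /cact repr_coset1; apply/setP => z.
apply/imsetP/idP => [[y hy ->]|hz]; first by rewrite perm1.
by exists z; rewrite ?perm1.
Qed.

Lemma trGN : transitive_on (G / N) (@cact V N) (norbs N).
Proof.
move=> B1 B2 /norbsP[x ->] /norbsP[y ->]; have [g hg <-] := Gtr x y.
by exists (coset N g); [exact: mem_quotient | exact: cactE].
Qed.

Lemma gorbit_cact (M : {group coset_of N}) B c : M \subset G / N ->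
  B \in norbs N -> c \in M -> gorbit M (@cact V N) (cact B c) = gorbit M (@cact V N) B.
Proof.
move=> sM hB hc; have hc' := subsetP sM _ hc.
apply/setP => Z; apply/imsetP/imsetP => -[d hd ->].
  by exists (c * d); rewrite ?groupM ?cactM // (subsetP sM).
exists (c^-1 * d); first by rewrite groupM ?groupV.
by rewrite cactM ?groupM ?groupV ?(subsetP sM) // mulKVg.
Qed.

Hypothesis hmax : forall M : {group {perm V}}, M <| G -> N \subset M -> 3 <= #|norbs M| -> M :=: N.

Lemma norbitsM (M : {group coset_of N}) : M <| G / N -> M :!=: 1 ->
  norbits M (@cact V N) (norbs N) <= 2.
Proof.
move=> hMn hM1; set M' := (coset N @*^-1 M)%G.
have hM'n : M' <| G by rewrite -(quotientGK hN) cosetpre_normal.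
have hNM' : N \subset M' by exact: sub_cosetpre.
have sM : M \subset G / N by exact: normal_sub.
have hM'2 : #|norbs M'| <= 2.
  rewrite leqNgt; apply/negP => h; have e := hmax hM'n hNM' h.
  move: hM1; rewrite -(cosetpreK M) -/M'.
  have -> : M' / N = N / N by rewrite e.
  by rewrite trivg_quotient eqxx.
apply: leq_trans hM'2.
pose F (O' : {set V}) := if [pick y in O'] is Some y then gorbit M (@cact V N) (O y) else set0.
apply: leq_trans (leq_imset_card F _); apply: subset_leq_card.
apply/subsetP => Z /imsetP[B hB ->]; case/norbsP: (hB) => x eB.
apply/imsetP; exists (orbit 'P M' x); first by apply/imsetP; exists x.
rewrite /F; case: pickP => [y|/(_ x)]; last by rewrite orbit_refl.
case/orbitP => m hm /= <-.
rewrite eB -cactE; last by apply: (subsetP (normal_sub hM'n)).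
rewrite gorbit_cact //; first by apply/norbsP; exists x.
by rewrite -(cosetpreK M) -/M' mem_quotient.
Qed.

Lemma qbq : quasiprimitive_on (G / N) (@cact V N) (norbs N) \/
            biquasiprimitive_on (G / N) (@cact V N) (norbs N).
Proof.
case: (classic (forall M : {group coset_of N}, M <| G / N -> M :!=: 1 ->
          transitive_on M (@cact V N) (norbs N))) => [h|h].
  by left; split; [exact: trGN | exact: h].
right; split; first exact: trGN.
split; first by move=> M; exact: norbitsM.
have [M hM] := not_all_ex_not _ _ h.
have [hMn hM'] := imply_to_and _ _ hM; have [hM1 ntr] := imply_to_and _ _ hM'.
exists M; split => //; apply/eqP; rewrite eqn_leq norbitsM //=.
have [B1 hB1] := not_all_ex_not _ _ ntr; have [B2 hB2] := not_all_ex_not _ _ hB1.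
have [hB1m hB2'] := imply_to_and _ _ hB2; have [hB2m nex] := imply_to_and _ _ hB2'.
have sM : M \subset G / N by exact: normal_sub.
have ne : gorbit M (@cact V N) B1 != gorbit M (@cact V N) B2.
  apply/eqP => e; apply: nex.
  have : B2 \in gorbit M (@cact V N) B2 by apply/imsetP; exists 1; rewrite ?group1 ?cact1.
  by rewrite -e => /imsetP[a ha ->]; exists a.
apply: leq_trans (_ : #|[set gorbit M (@cact V N) B1; gorbit M (@cact V N) B2]| <= _).
  by rewrite cards2 ne.
apply: subset_leq_card; apply/subsetP => Z; rewrite !inE => /orP[] /eqP ->;
  apply/imsetP; [exists B1 | exists B2] => //.
Qed.

Lemma nbN u B : B \in norbs N -> qadj adj (O u) B -> exists2 w, adj u w & B = O w.
Proof.
case/norbsP => b ->; rewrite qadjE => /existsP[w /andP[hw ha]].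
by exists w => //; rewrite (Oeq hw).
Qed.

Lemma qadj_nb u w : adj u w -> qadj adj (O u) (O w).
Proof. by move=> h; rewrite qadjE; apply/existsP; exists w; rewrite Orefl. Qed.

Lemma Onorbs x : O x \in norbs N.
Proof. by apply/norbsP; exists x. Qed.

Lemma stabq h u : h \in G -> h u = u -> coset N h \in gstab (G / N) (@cact V N) (O u).
Proof. by move=> hh hu; rewrite inE mem_quotient //= cactE // hu eqxx. Qed.

Lemma stab1 u B1 B2 : B1 \in norbs N -> B2 \in norbs N ->
  qadj adj (O u) B1 -> qadj adj (O u) B2 ->
  exists2 c, c \in gstab (G / N) (@cact V N) (O u) & cact B1 c = B2.
Proof.
move=> h1 h2 q1 q2; have [w1 a1 ->] := nbN h1 q1; have [w2 a2 ->] := nbN h2 q2.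
have [h hh [hu hw]] := Gu1 a1 a2.
by exists (coset N h); [exact: stabq | rewrite cactE // hw].
Qed.

Lemma qsph1 u B : (B \in sphere (norbs N) (qadj adj) 1 (O u)) =
   (B \in norbs N) && qadj adj (O u) B.
Proof.
rewrite inE dist1 ?T3 // Onorbs andbT; case: (boolP (qadj _ _ _)); rewrite ?andbF //.
by case/andP => ->.
Qed.

Lemma qsph2 u B : B \in sphere (norbs N) (qadj adj) 2 (O u) -> exists2 w, rel2 u w & B = O w.
Proof.
rewrite inE dist2 ?T3 // Onorbs /= => /and3P[hB /andP[nuB nq] /existsP[C /andP[hC /andP[q1 q2]]]].
have [c ac eC] := nbN hC q1; rewrite eC in q2.
case/norbsP: hB => b eB; rewrite eB in nuB nq q2 *.
move: q2; rewrite qadjE => /existsP[w /andP[hw acw]].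
exists w; last by rewrite (Oeq hw).
apply/and3P; split.
- by apply: contraNneq nuB => ->; rewrite (Oeq hw).
- by apply: contra nq => /qadj_nb; rewrite (Oeq hw).
- by apply/existsP; exists c; rewrite ac acw.
Qed.

Lemma ex_rel2 : exists u w, rel2 u w.
Proof.
case: (boolP [exists u, exists w, rel2 u w]).
  by case/existsP => u /existsP[w h]; exists u, w.
move/existsPn => hno; exfalso.
have hall : forall u v, (u == v) || adj u v.
  move=> u; have := @conn_set [pred v | (u == v) || adj u v] u.
  rewrite inE eqxx => /(_ isT) h v; apply: h => p q; rewrite !inE => /orP[/eqP <-|hup] hpq.
    by rewrite hpq orbT.
  case: (u =P q) => //= nuq; case: (boolP (adj u q)) => // nadj.
  have r : rel2 u q.
    by apply/and3P; split; [apply/eqP | | apply/existsP; exists p; rewrite hup hpq].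
  by move: (hno u) => /existsPn /(_ q); rewrite r.
case: hdt => hd _ _; move: hd; apply/negP; rewrite -ltnNge ltnS.
apply/bigmax_leqP => u _; apply/bigmax_leqP => v _.
case/orP: (hall u v) => h.
  by have := dist0 [set: V] adj V3 u v; rewrite h => /eqP ->.
have : (u != v) by apply: contraTneq h => ->; rewrite hirr.
move=> nuv; have := dist1 [set: V] adj V3 u v; rewrite nuv in_setT h => /eqP ->.
by [].
Qed.

Lemma dichot :
  (complete_graph (norbs N) (qadj adj) /\
     arc_transitive (norbs N) (qadj adj) (G / N) (@cact V N)) \/
  (~ complete_graph (norbs N) (qadj adj) /\
     dist_transitive (norbs N) (qadj adj) (G / N) (@cact V N) 2).
Proof.
case: (boolP [exists u, exists w, rel2 u w && qadj adj (O u) (O w)]).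
  case/existsP => u0 /existsP[w0 /andP[r0 q0]].
  have allq : forall u w, rel2 u w -> qadj adj (O u) (O w).
    move=> u w r; have [g hg gu] := Gtr u0 u.
    have r' : rel2 u (g w0) by rewrite -gu; exact: rel2G.
    have [h hh [hu hw]] := Gu2 r' r.
    move: q0; rewrite !qadjE => /existsP[y /andP[hy ay]]; apply/existsP.
    exists (h (g y)); rewrite -hw -{1}hu -gu !hinv // ay andbT.
    by have := Oimg1 (groupM hg hh) hy; rewrite !permM.
  left; split.
    move=> B B' /norbsP[u ->] /norbsP[v ->] nuv.
    have hall : forall v, (O v == O u) || qadj adj (O u) (O v).
      move=> v'; have := @conn_set [pred v | (O v == O u) || qadj adj (O u) (O v)] u.
      rewrite inE eqxx => /(_ isT) h; apply: h => p q; rewrite !inE => /orP[/eqP ep|qp] hpq.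
        have hp : p \in O u by rewrite -ep Orefl.
        have [q' aq hq] := Oshift hp hpq.
        by rewrite (Oeq hq) qadj_nb ?orbT.
      have [p' ap ep] := nbN (Onorbs p) qp.
      have hp : p \in O p' by rewrite -ep Orefl.
      have [q' aq hq] := Oshift hp hpq; rewrite (Oeq hq).
      case: (u =P q') => [<-|nuq]; first by rewrite eqxx.
      case: (boolP (adj u q')) => [/qadj_nb -> |nadj]; first by rewrite orbT.
      rewrite allq ?orbT //; apply/and3P; split => //; first by apply/eqP.
      by apply/existsP; exists p'; rewrite ap aq.
    by case/orP: (hall v) => // /eqP e; rewrite e eqxx in nuv.
  move=> B1 B2 B1' B2' h1 h2 h1' h2' q q'.
  case/norbsP: h1 => x ex; case/norbsP: h1' => x' ex'; subst B1 B1'.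
  have [y ay ->] := nbN h2 q; have [y' ay' ->] := nbN h2' q'.
  have [g hg gx] := Gtr x x'.
  have e : adj x' (g y) by rewrite -gx hinv.
  have [h hh [hx hy]] := Gu1 e ay'.
  exists (coset N (g * h)); first by rewrite mem_quotient ?groupM.
  by rewrite !cactE ?groupM // !permM gx hx hy.
move=> hno; right.
have [u [w r]] := ex_rel2.
have nq : ~~ qadj adj (O u) (O w).
  by apply: contra hno => q; apply/existsP; exists u; apply/existsP; exists w; rewrite r q.
have nuw : O u != O w.
  apply/negP => /eqP e; case/and3P: r => nuw' _ /existsP[z /andP[a1 a2]].
  have a1' : adj z u by rewrite hsym.
  have := uniq_nbr a1' a2; rewrite -(Oeq (y := w)) ?e ?Orefl // => /(_ isT) eq.
  by rewrite eq eqxx in nuw'.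
split.
  by move=> hc; move: nq; rewrite hc ?Onorbs.
split.
- apply: leq_trans (dist_le_diam _ (Onorbs u) (Onorbs w)).
  by apply: dist_ge2; rewrite ?T3 // Onorbs.
- exact: trGN.
move=> i B hi /norbsP[u0 ->] B1 B2.
case: i hi => [|[|[|//]]] _.
- rewrite !inE !dist0 ?T3 // => /andP[_ /eqP <-] /andP[_ /eqP <-].
  by exists 1; rewrite ?cact1 // inE group1 cact1 eqxx.
- rewrite !qsph1 => /andP[h1 q1] /andP[h2 q2]; exact: stab1.
- move=> /qsph2[w1 r1 ->] /qsph2[w2 r2 ->].
  have [h hh [hu hw]] := Gu2 r1 r2.
  by exists (coset N h); [exact: stabq | rewrite cactE // hw].
Qed.

Lemma locprim : locally_primitive [set: V] adj G (@pact V) ->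
  locally_primitive (norbs N) (qadj adj) (G / N) (@cact V N).
Proof.
move=> hlp B /norbsP[u ->]; have [_ hblk] := hlp u (in_setT u).
have nbE : forall B', (B' \in nbhd (norbs N) (qadj adj) (O u)) = (B' \in norbs N) && qadj adj (O u) B'.
  by move=> B'; rewrite inE.
split.
  move=> B1 B2; rewrite !nbE => /andP[h1 q1] /andP[h2 q2]; exact: stab1.
move=> X [sX hX] nX.
have Xw : forall B', B' \in X -> exists2 w, adj u w & B' = O w.
  move=> B' /(subsetP sX); rewrite nbE => /andP[h q]; exact: nbN.
pose Y := [set w in nbhd [set: V] adj u | O w \in X].
have XE : X = [set O w | w in Y].
  apply/setP => B'; apply/idP/imsetP => [hB|[w]].
    have [w aw eB] := Xw _ hB; exists w => //; rewrite !inE aw /=; by rewrite -eB.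
  by rewrite !inE => /andP[_ hw] ->.
have hY : is_block (gstab G (@pact V) u) (@pact V) (nbhd [set: V] adj u) Y.
  split; first by apply/subsetP => w; rewrite inE => /andP[].
  move=> h; rewrite inE => /andP[hh /eqP hu].
  have hc := stabq hh hu.
  have key : gimage (@pact V) Y h =
      [set w in nbhd [set: V] adj u | O w \in gimage (@cact V N) X (coset N h)].
    apply/setP => z; apply/imsetP/idP => [[w hw ->]|].
      move: hw; rewrite !inE /= => /andP[aw hw].
      rewrite /pact -{1}hu hinv // aw /=; apply/imsetP; exists (O w) => //.
      by rewrite cactE.
    rewrite !inE ?in_setT /= => /andP[az /imsetP[B' hB' eB']].
    have [w aw eB] := Xw _ hB'; rewrite eB cactE // in eB'.
    have ahw : adj u (h w) by rewrite -{1}hu hinv.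
    have ez := uniq_nbr ahw az; rewrite -eB' Orefl in ez.
    exists w; last by rewrite /pact ez.
    by rewrite !inE ?in_setT aw -eB hB'.
  case: (hX _ hc) => [e|dis]; [left | right].
    by rewrite key e.
  rewrite key -setI_eq0; apply/eqP/setP => z; rewrite !inE.
  apply/negP => /andP[/andP[_ h1] /andP[_ h2]].
  by rewrite (disjointFr dis h1) in h2.
have nY : Y != set0.
  case/set0Pn: nX => B' hB'; have [w aw eB] := Xw _ hB'.
  by apply/set0Pn; exists w; rewrite !inE ?in_setT aw -eB hB'.
case: (hblk Y hY nY) => [cY|eY]; [left | right].
  by rewrite XE; apply: leq_trans cY; exact: leq_imset_card.
apply/setP => B'; rewrite nbE; apply/idP/andP => [hB|[hB q]].
  by have [w aw ->] := Xw _ hB; rewrite Onorbs qadj_nb.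
have [w aw ->] := nbN hB q; rewrite XE; apply/imsetP; exists w => //.
by rewrite eY inE ?in_setT.
Qed.

End Main.

Import GroupScope.

Theorem theorem4p1 (V : finType) (adj : rel V) (G N : {group {perm V}}) :
  symmetric adj -> irreflexive adj ->
  (forall g x y, g \in G -> adj (g x) (g y) = adj x y) ->
  (forall x y : V, connect adj x y) ->
  dist_transitive [set: V] adj G (@pact V) 2 ->
  ~ (exists m b, 3 <= m /\ 2 <= b /\ is_Kmb adj m b) ->
  N <| G -> 3 <= #|norbs N| ->
  (forall M : {group {perm V}}, M <| G -> N \subset M -> 3 <= #|norbs M| -> M :=: N) ->
  [/\ semiregular N,
      [/\
      quasiprimitive_on (G / N) (@cact V N) (norbs N) \/
        biquasiprimitive_on (G / N) (@cact V N) (norbs N)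
      & is_cover adj N],
      (complete_graph (norbs N) (qadj adj) /\
         arc_transitive (norbs N) (qadj adj) (G / N) (@cact V N)) \/
      (~ complete_graph (norbs N) (qadj adj) /\
         dist_transitive (norbs N) (qadj adj) (G / N) (@cact V N) 2),
      (locally_primitive [set: V] adj G (@pact V) ->
         locally_primitive (norbs N) (qadj adj) (G / N) (@cact V N)) &
      (odd #|V| -> odd #|norbs N|)].
Proof.
move=> hsym hirr hinv hconn hdt hnK hN h3 hmax; split.
- exact: (semiregN hsym hirr hinv hconn hdt hN h3 hnK).
- split; [eapply qbq | eapply coverN]; eassumption.
- eapply dichot; eassumption.
- eapply locprim; eassumption.
- eapply oddN; eassumption.
Qed.
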